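(* For every odd integer $m\ge 9$ and every odd integer $\Delta\ge m$, there exists an $m$-$\gamma_t$-critical graph $G$ of order $\Delta+m$ with $\Delta(G)=\Delta$ and $\delta(G)\ge 2$.
   Context: All graphs are finite and simple; $\Delta(G)$, $\delta(G)$ are maximum and minimum degree. A set $S\subseteq V(G)$ is a total dominating set if every vertex of $G$ is adjacent to some vertex of $S$; $\gamma_t(G)$ is the minimum size of such a set. A leaf is a vertex of degree one. A graph $G$ with no isolated vertex is $\gamma_t$-critical if for every vertex $v$ not adjacent to a leaf, $\gamma_t(G-v)<\gamma_t(G)$; it is $m$-$\gamma_t$-critical if moreover $\gamma_t(G)=m$. *)

(* Defs.v *)
(* A simple graph on a finite type T is a symmetric,
   irreflexive relation e; subgraphs induced on vertex sets V : {set T}. *)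
From mathcomp Require Import all_boot.
Set Implicit Arguments. Unset Strict Implicit. Unset Printing Implicit Defensive.

Definition simple_graph (T : finType) (e : rel T) : Prop :=
  symmetric e /\ irreflexive e.

Definition nbr (T : finType) (e : rel T) (V : {set T}) (x : T) : {set T} :=
  [set y in V | e x y].
Definition deg (T : finType) (e : rel T) (V : {set T}) (x : T) : nat :=
  #|nbr e V x|.

Definition max_deg (T : finType) (e : rel T) (V : {set T}) : nat :=
  \max_(x in V) deg e V x.
Definition min_deg (T : finType) (e : rel T) (V : {set T}) : nat :=
  \big[minn/#|T|]_(x in V) deg e V x.

Definition is_tds (T : finType) (e : rel T) (V S : {set T}) : bool :=
  (S \subset V) && [forall x in V, exists y in S, e x y].

(* total domination number; if no total dominating set exists
   (isolated vertex) the value #|T|.+1 acts as "infinity". *)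
Definition gamma_t (T : finType) (e : rel T) (V : {set T}) : nat :=
  \big[minn/#|T|.+1]_(S : {set T} | is_tds e V S) #|S|.

Definition is_leaf (T : finType) (e : rel T) (V : {set T}) (x : T) : bool :=
  deg e V x == 1.

Definition gt_critical (T : finType) (e : rel T) : Prop :=
  (forall x : T, 0 < deg e setT x) /\
  (forall v : T, ~~ [exists u, e v u && is_leaf e setT u] ->
     gamma_t e [set~ v] < gamma_t e setT).

Definition m_gt_critical (m : nat) (T : finType) (e : rel T) : Prop :=
  gt_critical e /\ gamma_t e setT = m.

(* Main.v *)
From HB Require Import structures.
Require Import Defs.
From mathcomp Require Import all_boot.
From Stdlib Require Import Lia.
Set Implicit Arguments. Unset Strict Implicit. Unset Printing Implicit Defensive.

Ltac nlia := repeat match goal with H : is_true (_ <= _) |- _ => move/leP: H => H end;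
  try apply/leP;
  repeat match goal with H : context [addn] |- _ => rewrite addnE in H
  | H : context [muln] |- _ => rewrite mulnE in H
  | H : context [subn] |- _ => rewrite subnE in H end;
  rewrite ?addnE ?mulnE ?subnE; lia.

Section Gen.
Variables (T : finType) (e : rel T).
Lemma bigmin_le (I : eqType) (r : seq I) (P : pred I) (F : I -> nat) idx x :
  x \in r -> P x -> \big[minn/idx]_(i <- r | P i) F i <= F x.
Proof.
elim: r => // a r IH; rewrite in_cons big_cons => /orP[/eqP <- -> | xr Px].
  exact: geq_minl.
case: (P a); last exact: IH.
by apply: leq_trans (geq_minr _ _) (IH xr Px).
Qed.
Lemma gamma_le (V S : {set T}) : is_tds e V S -> gamma_t e V <= #|S|.
Proof. by move=> h; apply: bigmin_le => //; rewrite mem_index_enum. Qed.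
Lemma gamma_ge (V : {set T}) n : n <= #|T|.+1 -> (forall S, is_tds e V S -> n <= #|S|) -> n <= gamma_t e V.
Proof.
move=> h1 h2; rewrite /gamma_t; apply: (big_ind (fun k => n <= k)) => //.
  by move=> x y hx hy; rewrite leq_min hx hy.
Qed.
Lemma tdsP (V S : {set T}) : S \subset V -> (forall x, x \in V -> exists2 y, y \in S & e x y) -> is_tds e V S.
Proof.
move=> hS h; rewrite /is_tds hS /=; apply/forall_inP => x /h [y hy hxy].
by apply/exists_inP; exists y.
Qed.
Lemma tds_dom (V S : {set T}) x : is_tds e V S -> x \in V -> exists2 y, y \in S & e x y.
Proof. by case/andP=> _ /forall_inP h /h /exists_inP. Qed.
Lemma deg_ge (V : {set T}) x a b : a != b -> a \in V -> b \in V -> e x a -> e x b -> 2 <= deg e V x.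
Proof.
move=> ab aV bV ea eb; rewrite /deg; apply: (@leq_trans #|[set a; b]|); first by rewrite cards2 ab.
apply: subset_leq_card.
by apply/subsetP => y; rewrite !inE => /orP[]/eqP->; rewrite ?aV ?bV ?ea ?eb.
Qed.
Lemma deg_le_seq x (s : seq T) : (forall y, e x y -> y \in s) -> deg e setT x <= size s.
Proof.
move=> h; rewrite /deg; apply: leq_trans (card_size s); apply: subset_leq_card.
by apply/subsetP => y; rewrite inE => /andP[_ /h].
Qed.
End Gen.

Section G.
Variables B r : nat.
Notation K := B.+3.
Inductive V := VH | VS of bool | VW of 'I_3 | VY of 'I_K & bool | VX of 'I_K & bool | VE of 'I_r & bool.
Definition cT := (((((unit + bool) + 'I_3) + ('I_K * bool)) + ('I_K * bool)) + ('I_r * bool))%type.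
Definition code (v : V) : cT :=
  match v with
  | VH => inl (inl (inl (inl (inl tt))))
  | VS b => inl (inl (inl (inl (inr b))))
  | VW i => inl (inl (inl (inr i)))
  | VY i x => inl (inl (inr (i, x)))
  | VX i x => inl (inr (i, x))
  | VE j x => inr (j, x)
  end.
Definition decode (c : cT) : V :=
  match c with
  | inl (inl (inl (inl (inl _)))) => VH
  | inl (inl (inl (inl (inr b)))) => VS b
  | inl (inl (inl (inr i))) => VW i
  | inl (inl (inr (i, x))) => VY i x
  | inl (inr (i, x)) => VX i x
  | inr (j, x) => VE j x
  end.
Lemma codeK : cancel code decode. Proof. by case. Qed.
Lemma decodeK : cancel decode code. Proof. by do 5?case => //; case. Qed.
HB.instance Definition _ := Finite.copy V (can_type codeK).
Lemma card_V : #|{: V}| = 18 + 4 * B + 2 * r.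
Proof.
rewrite (bij_eq_card (f := code)); last by exists decode; [apply codeK | apply decodeK].
rewrite /cT !card_sum !card_prod !card_ord card_unit card_bool.
rewrite /= ; nlia.
Qed.

Definition e0 (u v : V) : bool :=
  match u, v with
  | VH, VW _ | VH, VX _ _ | VH, VE _ _ => true
  | VS x, VS y => x != y
  | VW i, VS x => x == (nat_of_ord i != 1)
  | VY i x, VY j y => (i == j) && (x != y)
  | VY i x, VX j y => (i == j) && (x == y)
  | VY i x, VE _ y => (nat_of_ord i == 0) && (x == y)
  | VX i x, VE _ y => (nat_of_ord i == 0) && (x != y)
  | VE j x, VE k y => (j != k) && (x != y)
  | VW i, VX j _ => (nat_of_ord i == nat_of_ord j)
  | VW i, VE _ _ => (nat_of_ord i == 0)
  | _, _ => false
  end.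
Definition e (u v : V) : bool := e0 u v || e0 v u.

Lemma e_sym : symmetric e. Proof. by move=> u v; rewrite /e orbC. Qed.
Lemma e_irr : irreflexive e.
Proof. by case=> [|x|i|i x|i x|j x]; rewrite /e /= ?eqxx ?andbF. Qed.
Lemma simple_e : simple_graph e. Proof. split; [exact: e_sym | exact: e_irr]. Qed.

Definition o0 : 'I_K := ord0.
Definition w0 : 'I_3 := ord0.

Ltac bsolve := repeat match goal with
  | |- is_true (_ || _) -> _ => case/orP
  | |- is_true (_ && _) -> _ => case/andP
  | |- is_true (_ == _) -> _ => move/eqP
  | |- (_ = _) -> _ => let h := fresh in move=> h; try subst
  | |- is_true false -> _ => done
  end.

Lemma eY_inv i x v : e (VY i x) v ->
  v = VY i (~~ x) \/ v = VX i x \/ (nat_of_ord i = 0 /\ exists j, v = VE j x).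
Proof.
case: v => [|y|b|j y|j y|k y]; rewrite /e /= ?orbF //.
- by case/orP=> /andP[/eqP-> h]; case: x y h => [] [] //= _; auto.
- by case/andP=> /eqP-> /eqP->; auto.
- by case/andP=> /eqP h /eqP->; right; right; split=> //; exists k.
Qed.

Lemma eX_inv i x v : e (VX i x) v ->
  v = VH \/ v = VY i x \/ (exists a : 'I_3, nat_of_ord a = i /\ v = VW a) \/
  (nat_of_ord i = 0 /\ exists j, v = VE j (~~ x)).
Proof.
case: v => [|y|b|j y|j y|k y]; rewrite /e /= ?orbF //.
- by auto.
- by move/eqP=> h; right; right; left; exists b.
- by case/andP=> /eqP-> /eqP->; auto.
- by case/andP=> /eqP h hb; right; right; right; split=> //; exists k; case: x y hb => [] [].
Qed.

Lemma eE_inv j x v : e (VE j x) v ->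
  v = VH \/ v = VY o0 x \/ v = VW w0 \/ v = VX o0 (~~ x) \/
  (exists k, k != j /\ v = VE k (~~ x)).
Proof.
case: v => [|y|b|i y|i y|k y]; rewrite /e /= ?orbF //.
- by auto.
- move/eqP=> h; right; right; left; congr VW; exact: val_inj.
- case/andP=> /eqP h /eqP->; right; left; congr VY; exact: val_inj.
- case/andP=> /eqP h hb; right; right; right; left; have ->: i = o0 by apply: val_inj.
  by case: x y hb => [] [].
- move=> h; right; right; right; right; exists k.
  case/orP: h => /andP[hk hb]; (split; [by rewrite // eq_sym | by case: x y hb => [] []]).
Qed.

Lemma eW_inv a v : e (VW a) v ->
  v = VH \/ v = VS (nat_of_ord a != 1) \/ (exists i x, nat_of_ord i = a /\ v = VX i x) \/
  (nat_of_ord a = 0 /\ exists j x, v = VE j x).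
Proof.
case: v => [|y|b|i y|i y|k y]; rewrite /e /= ?orbF //.
- by auto.
- by move/eqP->; auto.
- by move/eqP=> h; right; right; left; exists i, y.
- by move/eqP=> h; right; right; right; split=> //; exists k, y.
Qed.

Lemma eS_inv x v : e (VS x) v ->
  v = VS (~~ x) \/ exists a : 'I_3, x = (nat_of_ord a != 1) /\ v = VW a.
Proof.
case: v => [|y|b|i y|i y|k y]; rewrite /e /= ?orbF //.
- by case/orP=> h; left; case: x y h => [] [].
- by move/eqP=> h; right; exists b.
Qed.

Definition w1 : 'I_3 := @Ordinal 3 1 isT.
Definition w2 : 'I_3 := @Ordinal 3 2 isT.
Definition wid (a : 'I_3) : 'I_K := widen_ord (isT : 3 <= K) a.

Definition Sl := [:: VS false; VS true].
Definition Wl := [seq VW a | a <- enum 'I_3].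
Definition Yl := [seq VY p.1 p.2 | p <- enum {: 'I_K * bool}].
Definition Xl := [seq VX p.1 p.2 | p <- enum {: 'I_K * bool}].
Definition El := [seq VE p.1 p.2 | p <- enum {: 'I_r * bool}].

Lemma size_Wl : size Wl = 3. Proof. by rewrite size_map size_enum_ord. Qed.
Lemma size_Yl : size Yl = 2 * K.
Proof. by rewrite size_map -cardE card_prod card_ord card_bool mulnC. Qed.
Lemma size_Xl : size Xl = 2 * K.
Proof. by rewrite size_map -cardE card_prod card_ord card_bool mulnC. Qed.
Lemma size_El : size El = 2 * r.
Proof. by rewrite size_map -cardE card_prod card_ord card_bool mulnC. Qed.
Lemma in_Wl a : VW a \in Wl. Proof. by apply: map_f; rewrite mem_enum. Qed.
Lemma in_Yl i x : VY i x \in Yl. Proof. by apply: (map_f (fun p => VY p.1 p.2) (x := (i, x))); rewrite mem_enum. Qed.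
Lemma in_Xl i x : VX i x \in Xl. Proof. by apply: (map_f (fun p => VX p.1 p.2) (x := (i, x))); rewrite mem_enum. Qed.
Lemma in_El j x : VE j x \in El. Proof. by apply: (map_f (fun p => VE p.1 p.2) (x := (j, x))); rewrite mem_enum. Qed.

Definition D0 := 2 * r + 2 * B + 9.

Lemma degH : deg e setT VH = D0.
Proof.
apply/eqP; rewrite eqn_leq; apply/andP; split.
  apply: leq_trans (deg_le_seq (s := Wl ++ Xl ++ El) _) _.
    case=> [|y|b|j y|j y|k y]; rewrite /e //= => _;
    by rewrite !mem_cat ?in_Wl ?in_Xl ?in_El ?orbT.
  by rewrite !size_cat size_Wl size_Xl size_El /D0 ; nlia.
rewrite /deg cardsCs card_V.
have: #|~: nbr e setT VH| <= size (VH :: Sl ++ Yl).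
  apply: leq_trans (card_size _); apply: subset_leq_card; apply/subsetP.
  case=> [|y|b|j y|j y|k y]; rewrite !inE /e //=.
  - by case: y.
  - by rewrite in_Yl.
by rewrite /= size_Yl /D0 => h; nlia.
Qed.

Lemma deg_le v : v != VH -> deg e setT v <= D0.
Proof.
have H: forall v a b : V, (forall y, e v y -> y \in [:: VH; a; b] ++ Sl ++ Wl ++ El) ->
  deg e setT v <= D0.
  move=> {}v a b h; apply: leq_trans (deg_le_seq h) _.
  by rewrite !size_cat size_Wl size_El /= /D0 ; nlia.
case: v => [|x|a|i x|i x|j x] // _.
- apply: (H _ VH VH) => y /eS_inv [->|[a [_ ->]]];
  by rewrite !mem_cat ?in_Wl ?orbT //; case: x.
- apply: (H _ (VX (wid a) false) (VX (wid a) true)) => y /eW_inv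
    [->|[->|[[i [z [hi ->]]]|[_ [j [z ->]]]]]]; rewrite ?mem_cat ?in_Wl ?in_El ?orbT //.
  + by case: (nat_of_ord a != 1).
  + have ->: i = wid a by apply: val_inj.
    by case: z; rewrite !inE eqxx ?orbT.
- apply: (H _ (VY i (~~ x)) (VX i x)) => y /eY_inv [->|[->|[_ [j ->]]]];
  by rewrite ?mem_cat ?in_El ?orbT // !inE eqxx ?orbT.
- apply: (H _ (VY i x) VH) => y /eX_inv [->|[->|[[a [_ ->]]|[_ [j ->]]]]];
  by rewrite ?mem_cat ?in_Wl ?in_El ?orbT // !inE eqxx ?orbT.
- apply: (H _ (VY o0 x) (VX o0 (~~ x))) => y /eE_inv [->|[->|[->|[->|[k [_ ->]]]]]];
  by rewrite ?mem_cat ?in_Wl ?in_El ?orbT // !inE eqxx ?orbT.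
Qed.

Lemma deg_ge2 v : 2 <= deg e setT v.
Proof.
case: v => [|x|a|i x|i x|j x].
- by apply: (@deg_ge _ _ _ _ (VW w0) (VW w1)); rewrite ?inE.
- apply: (@deg_ge _ _ _ _ (VS (~~ x)) (VW (if x then w0 else w1))); rewrite ?inE //;
  by case: x.
- apply: (@deg_ge _ _ _ _ VH (VS (nat_of_ord a != 1))); rewrite ?inE // /e /= ?eqxx ?orbT //.
- apply: (@deg_ge _ _ _ _ (VY i (~~ x)) (VX i x)); rewrite ?inE // /e /= ?eqxx ?orbT //.
  by case: x.
- apply: (@deg_ge _ _ _ _ VH (VY i x)); rewrite ?inE // /e /= ?eqxx ?orbT //.
- apply: (@deg_ge _ _ _ _ VH (VY o0 x)); rewrite ?inE // /e /= ?eqxx ?orbT //.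
Qed.

Lemma maxdeg : max_deg e setT = D0.
Proof.
apply/eqP; rewrite eqn_leq; apply/andP; split.
  apply/bigmax_leqP => v _; case: (v =P VH) => [->|/eqP h]; first by rewrite degH.
  exact: deg_le.
by rewrite -{1}degH /max_deg; apply: leq_bigmax_cond; rewrite inE.
Qed.

Lemma mindeg : 2 <= min_deg e setT.
Proof.
rewrite /min_deg; apply: (big_ind (fun k => 2 <= k)).
- by rewrite card_V.
- by move=> a b ha hb; rewrite leq_min ha hb.
- by move=> v _; exact: deg_ge2.
Qed.

Definition veq (u v : V) : bool :=
  match u, v with
  | VH, VH => true
  | VS x, VS y => x == y
  | VW a, VW b => a == b
  | VY i x, VY j y => (i == j) && (x == y)
  | VX i x, VX j y => (i == j) && (x == y)
  | VE i x, VE j y => (i == j) && (x == y)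
  | _, _ => false
  end.
Lemma veqE (u v : V) : (u == v) = veq u v.
Proof.
apply/eqP/idP => [<-|].
  by case: u => [|x|a|i x|i x|j x] /=; rewrite ?eqxx.
case: u => [|x|a|i x|i x|j x]; case: v => [|y|b|k y|k y|l y] //=;
  try (by move/eqP->); by case/andP=> /eqP-> /eqP->.
Qed.

Definition mk (s t : seq V) : {set V} := [set v | (v \in s) && (v \notin t)].
Lemma card_mk s t : uniq t -> {subset t <= s} -> #|mk s t| <= size s - size t.
Proof.
move=> ut st.
have -> : mk s t = [set v in s] :\: [set v in t] by apply/setP => v; rewrite !inE andbC.
rewrite cardsD.
have -> : [set v in s] :&: [set v in t] = [set v in t].
  apply/setP => v; rewrite !inE; case h: (v \in t); by rewrite ?andbT ?andbF ?(st _ h).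
rewrite !cardsE (card_uniqP ut); apply: leq_sub2r; exact: card_size.
Qed.
Lemma card_mk0 s : #|mk s [::]| <= size s.
Proof. by have := @card_mk s [::]; rewrite subn0; apply. Qed.

Definition bdom (u : V) : V :=
  match u with
  | VH => VW w1
  | VS b => VS (~~ b)
  | VW a => VS (nat_of_ord a != 1)
  | VY i x => VY i (~~ x)
  | VX i x => VY i x
  | VE j x => VY o0 x
  end.
Lemma e_bdom u : e u (bdom u).
Proof.
case: u => [|x|a|i x|i x|j x]; rewrite /e /= ?eqxx ?orbT //; by case: x.
Qed.

Lemma memYl u : (u \in Yl) = (if u is VY _ _ then true else false).
Proof. case: u => *; rewrite ?in_Yl //; apply/negbTE/mapP => [[p _]] //. Qed.
Lemma memWl u : (u \in Wl) = (if u is VW _ then true else false).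
Proof. case: u => *; rewrite ?in_Wl //; apply/negbTE/mapP => [[p _]] //. Qed.

Ltac memt := rewrite ?inE ?mem_cat ?memYl ?memWl ?in_El ?veqE; try rewrite /e; rewrite /= ?inE ?mem_cat ?memYl ?memWl ?in_El ?veqE /= -?val_eqE /= ?eqxx ?orbT ?andbT ?andbF ?orbF //.

Ltac bfin := match goal with |- context [?b == false] => by case: b end.

Definition Sup := mk (VW w1 :: Sl ++ Yl) [::].
Lemma Sup_tds : is_tds e setT Sup.
Proof.
apply: tdsP => [|u _]; first exact: subsetT.
exists (bdom u); last exact: e_bdom.
case: u => [|x|a|i x|i x|j x]; memt; bfin.
Qed.
Lemma Sup_card : #|Sup| <= 2 * K + 3.
Proof. apply: leq_trans (card_mk0 _) _; rewrite /= ?size_cat size_Yl /=; nlia. Qed.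

Lemma sub_mk v s t : v \in t -> mk s t \subset [set~ v].
Proof. by move=> vt; apply/subsetP => u; rewrite !inE => /andP[_]; apply: contra => /eqP->. Qed.
Lemma sub_mk0 v s t : v \notin s -> mk s t \subset [set~ v].
Proof. by move=> vs; apply/subsetP => u; rewrite !inE => /andP[us _]; apply: contraNneq vs => <-. Qed.

Definition S_H := mk (Sl ++ Yl) [::].
Lemma S_H_tds : is_tds e [set~ VH] S_H.
Proof.
apply: tdsP => [|u]; first by apply: sub_mk0; memt.
rewrite !inE => hu; exists (bdom u); last exact: e_bdom.
case: u hu => [|x|a|i x|i x|j x] //= _; memt; bfin.
Qed.

Definition S_s := mk (VH :: VW w0 :: Yl) [::].
Lemma S_s_tds : is_tds e [set~ VS false] S_s.
Proof.
apply: tdsP => [|u]; first by apply: sub_mk0; memt.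
rewrite !inE => hu; case: u hu => [|x|a|i x|i x|j x] hu.
- by exists (VW w0); memt.
- by exists (VW w0); memt; case: x hu.
- by exists VH; memt.
all: by (eexists; last exact: e_bdom); memt.
Qed.

Definition S_t := mk (VH :: VW w1 :: Yl) [::].
Lemma S_t_tds : is_tds e [set~ VS true] S_t.
Proof.
apply: tdsP => [|u]; first by apply: sub_mk0; memt.
rewrite !inE => hu; case: u hu => [|x|a|i x|i x|j x] hu.
- by exists (VW w1); memt.
- by exists (VW w1); memt; case: x hu.
- by exists VH; memt.
all: by (eexists; last exact: e_bdom); memt.
Qed.

Definition S_W1 := mk (VS true :: VW w0 :: Yl) [::].
Lemma S_W1_tds : is_tds e [set~ VW w1] S_W1.
Proof.
apply: tdsP => [|u]; first by apply: sub_mk0; memt.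
rewrite !inE => hu; case: u hu => [|x|a|i x|i x|j x] hu.
- by exists (VW w0); memt.
- case: x hu => hu; first by exists (VW w0); memt.
  by exists (VS true); memt.
- by exists (VS true); memt.
all: by (eexists; last exact: e_bdom); memt.
Qed.

Definition S_W0 := mk ([:: VW w1; VW w2; VX (wid w1) true; VX (wid w2) true] ++ Yl)
  [:: VY (wid w1) false; VY (wid w2) false].
Lemma S_W0_tds : is_tds e [set~ VW w0] S_W0.
Proof.
apply: tdsP => [|u]; first by apply: sub_mk0; memt.
rewrite !inE => hu; case: u hu => [|x|a|i x|i x|j x] hu.
- by exists (VW w1); memt.
- by case: x hu => hu; [exists (VW w2) | exists (VW w1)]; memt.
- case: a hu => [[|[|[|n]]] Ha] hu //.
  + by exists (VX (wid w1) true); memt.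
  + by exists (VX (wid w2) true); memt.
- case: i hu => [[|[|[|n]]] Hi] hu.
  + by exists (VY (Ordinal Hi) (~~ x)); memt; rewrite -?val_eqE /= ?andbF //; case: x hu.
  + by case: x hu => hu; [exists (VX (wid w1) true) | exists (VY (wid w1) true)]; memt;
      rewrite -?val_eqE /= ?andbF.
  + by case: x hu => hu; [exists (VX (wid w2) true) | exists (VY (wid w2) true)]; memt;
      rewrite -?val_eqE /= ?andbF.
  + by exists (VY (Ordinal Hi) (~~ x)); memt; rewrite -?val_eqE /= ?andbF //; case: x hu.
- case: i hu => [[|[|[|n]]] Hi] hu.
  + by exists (VY (Ordinal Hi) x); memt; rewrite -?val_eqE /= ?andbF //; case: x hu.
  + by case: x hu => hu; [exists (VY (wid w1) true) | exists (VW w1)]; memt;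
      rewrite -?val_eqE /= ?andbF.
  + by case: x hu => hu; [exists (VY (wid w2) true) | exists (VW w2)]; memt;
      rewrite -?val_eqE /= ?andbF.
  + by exists (VY (Ordinal Hi) x); memt; rewrite -?val_eqE /= ?andbF //; case: x hu.
- by exists (VY o0 x); memt; rewrite -?val_eqE /= ?andbF //; case: x hu.
Qed.

Definition S_W2 := mk ([:: VW w0; VW w1; VX (wid w0) true; VX (wid w1) true] ++ Yl)
  [:: VY (wid w0) false; VY (wid w1) false].
Lemma S_W2_tds : is_tds e [set~ VW w2] S_W2.
Proof.
apply: tdsP => [|u]; first by apply: sub_mk0; memt.
rewrite !inE => hu; case: u hu => [|x|a|i x|i x|j x] hu.
- by exists (VW w0); memt.
- by case: x hu => hu; [exists (VW w0) | exists (VW w1)]; memt.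
- case: a hu => [[|[|[|n]]] Ha] hu //.
  + by exists (VX (wid w0) true); memt.
  + by exists (VX (wid w1) true); memt.
- case: i hu => [[|[|[|n]]] Hi] hu.
  + by case: x hu => hu; [exists (VX (wid w0) true) | exists (VY (wid w0) true)]; memt.
  + by case: x hu => hu; [exists (VX (wid w1) true) | exists (VY (wid w1) true)]; memt.
  + by exists (VY (Ordinal Hi) (~~ x)); memt; case: x hu.
  + by exists (VY (Ordinal Hi) (~~ x)); memt; case: x hu.
- case: i hu => [[|[|[|n]]] Hi] hu.
  + by case: x hu => hu; [exists (VY (wid w0) true) | exists (VW w0)]; memt.
  + by case: x hu => hu; [exists (VY (wid w1) true) | exists (VW w1)]; memt.
  + by exists (VY (Ordinal Hi) x); memt; case: x hu.
  + by exists (VY (Ordinal Hi) x); memt; case: x hu.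
- by case: x hu => hu; [exists (VY o0 true) | exists (VW w0)]; memt.
Qed.

Definition S_Y i x := mk ([:: VS false; VS true; VH; VX i (~~ x)] ++ Yl) [:: VY i false; VY i true].
Lemma S_Y_tds i x : is_tds e [set~ VY i x] (S_Y i x).
Proof.
apply: tdsP => [|u]; first by apply: sub_mk; memt; case: x.
rewrite !inE => hu; case: u hu => [|y|a|j y|j y|k y] hu.
- by exists (VX i (~~ x)); memt.
- by (eexists; last exact: e_bdom); memt; case: y hu.
- by (eexists; last exact: e_bdom); memt; case: (_ != 1).
- case: (j =P i) => [ji|nji].
    subst j; exists (VX i (~~ x)); memt; by case: x y hu => [] [] //; rewrite veqE /= eqxx.
  exists (VY j (~~ y)); memt; last by case: y hu.
  by move/eqP: nji; rewrite -val_eqE => /negbTE ->.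
- by exists VH; memt.
- by exists VH; memt.
Qed.

Definition S_X i x := mk ([:: VS false; VS true; VX i (~~ x)] ++ Yl) [:: VY i x].
Lemma S_X_tds i x : is_tds e [set~ VX i x] (S_X i x).
Proof.
apply: tdsP => [|u]; first by apply: sub_mk0; memt; case: x.
rewrite !inE => hu; case: u hu => [|y|a|j y|j y|k y] hu.
- by exists (VX i (~~ x)); memt.
- by (eexists; last exact: e_bdom); memt; case: y hu.
- by (eexists; last exact: e_bdom); memt; case: (_ != 1).
- case: (j =P i) => [ji|nji].
    subst j; case: (y =P ~~ x) => [->|nyx].
      by exists (VX i (~~ x)); memt.
    by exists (VY i (~~ y)); memt; case: x y nyx {hu} => [] [].
  exists (VY j (~~ y)); memt; last by case: y hu.
  by move/eqP: nji; rewrite -val_eqE => /negbTE ->.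
- by exists (VY j y); memt.
- case hc: ((nat_of_ord i == 0) && (y == x)).
    case/andP: hc => /eqP i0 /eqP ->; exists (VX i (~~ x)); memt; rewrite i0 /=.
    by case: x {hu}.
  by exists (VY o0 y); memt; rewrite eq_sym hc.
Qed.

Definition S_E j x := mk ([:: VS false; VS true; VE j (~~ x)] ++ Yl) [:: VY o0 x].
Lemma S_E_tds j x : is_tds e [set~ VE j x] (S_E j x).
Proof.
apply: tdsP => [|u]; first by apply: sub_mk0; memt; case: x.
rewrite !inE => hu; case: u hu => [|y|a|i y|i y|k y] hu.
- by exists (VE j (~~ x)); memt.
- by (eexists; last exact: e_bdom); memt; case: y hu.
- by (eexists; last exact: e_bdom); memt; case: (_ != 1).
- case hc: ((nat_of_ord i == 0) && (y == ~~ x)).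
    case/andP: hc => /eqP i0 /eqP ->; exists (VE j (~~ x)); memt; by rewrite i0.
  exists (VY i (~~ y)); memt; last by case: (y).
  by move: hc; case: (x); case: (y); rewrite /= ?andbT ?andbF // => ->.
- case hc: ((nat_of_ord i == 0) && (y == x)).
    case/andP: hc => /eqP i0 /eqP ->; exists (VE j (~~ x)); memt; rewrite i0 /=.
    by case: x {hu}.
  by exists (VY i y); memt; rewrite hc.
- case: (y =P x) => [yx|nyx].
    subst y; exists (VE j (~~ x)); memt.
    move: hu; rewrite veqE /= -val_eqE eqxx andbT => hkj.
    by rewrite hkj /=; case: x.
  exists (VY o0 y); memt.
  by apply/eqP => h; apply: nyx.
Qed.

Lemma crit v S : is_tds e [set~ v] S -> #|S| <= 2 * K + 2 -> gamma_t e [set~ v] <= 2 * K + 2.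
Proof. by move=> h1 h2; apply: leq_trans (gamma_le h1) h2. Qed.

Ltac cardt := first [ apply: leq_trans (card_mk0 _) _; rewrite /= ?size_cat size_Yl /=; nlia
  | apply: leq_trans (card_mk _ _) _; [ by memt | by apply/allP; memt
       | rewrite /= ?size_cat size_Yl /=; nlia] ].

Lemma gamma_crit v : gamma_t e [set~ v] <= 2 * K + 2.
Proof.
case: v => [|x|a|i x|i x|j x].
- by apply: (crit S_H_tds); rewrite /S_H; cardt.
- case: x.
    by apply: (crit S_t_tds); rewrite /S_t; cardt.
  by apply: (crit S_s_tds); rewrite /S_s; cardt.
- case: a => [[|[|[|n]]] Ha] //.
  + have -> : Ordinal Ha = w0 by apply: val_inj.
    by apply: (crit S_W0_tds); rewrite /S_W0; cardt.
  + have -> : Ordinal Ha = w1 by apply: val_inj.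
    by apply: (crit S_W1_tds); rewrite /S_W1; cardt.
  + have -> : Ordinal Ha = w2 by apply: val_inj.
    by apply: (crit S_W2_tds); rewrite /S_W2; cardt.
- by apply: (crit (S_Y_tds i x)); rewrite /S_Y; cardt.
- by apply: (crit (S_X_tds i x)); rewrite /S_X; cardt.
- by apply: (crit (S_E_tds j x)); rewrite /S_E; cardt.
Qed.

Definition owner (u : V) : V :=
  match u with
  | VH => VH
  | VS b => VS (~~ b)
  | VW a => VS (nat_of_ord a != 1)
  | VY i x => VY i (~~ x)
  | VX i x => VY i x
  | VE j x => VY o0 x
  end.

Definition yb (c : (bool + ('I_K * bool))%type) : V :=
  match c with inl b => VS b | inr p => VY p.1 p.2 end.
Lemma yb_inj : injective yb.
Proof. by case=> [b|[i x]] [c|[k y]] //= [] -> //; move=> ->. Qed.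
Definition Ybig := yb @: setT.
Lemma card_Ybig : #|Ybig| = 2 * K + 2.
Proof.
rewrite card_imset; last exact: yb_inj.
rewrite cardsT card_sum card_prod card_bool card_ord; nlia.
Qed.

Lemma own_nb c y : e (yb c) y -> owner y = yb c.
Proof.
case: c => [b|[i x]] /=.
  case/eS_inv => [->|[a [-> ->]]] //=; by rewrite negbK.
case/eY_inv => [->|[->|[i0 [j ->]]]] //=; first by rewrite negbK.
by congr VY; apply: val_inj.
Qed.

Lemma lower S : is_tds e setT S -> 2 * K + 3 <= #|S|.
Proof.
move=> hS; rewrite leqNgt; apply/negP => hlt.
have dom u : exists2 y, y \in S & e u y by apply: (tds_dom hS); rewrite inE.
have sub : Ybig \subset owner @: S.
  apply/subsetP => u /imsetP [c _ ->]; case: (dom (yb c)) => y yS hy.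
  by rewrite -(own_nb hy); apply: imset_f.
have c1 : #|owner @: S| <= #|S| := leq_imset_card _ _.
have c2 := subset_leq_card sub; rewrite card_Ybig in c2.
have HS : VH \notin S.
  apply/negP => hH.
  have : VH |: Ybig \subset owner @: S.
    by rewrite subUset sub andbT sub1set; apply: (imset_f owner hH).
  move/subset_leq_card; rewrite cardsU1 card_Ybig.
  have -> : VH \notin Ybig by apply/negP => /imsetP [[b|p] _].
  move=> /= h; have h2 := leq_trans h c1; clear -h2 hlt; nlia.
have inj : {in S &, injective owner}.
  apply/imset_injP; rewrite eqn_leq c1 /=.
  by apply: leq_trans c2; rewrite -ltnS -addnS.
have clX i x : VX i x \in S -> exists2 a : 'I_3, nat_of_ord a = i & VW a \in S.
  move=> hx; case: (dom (VX i (~~ x))) => y yS.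
  case/eX_inv=> [hy|[hy|[[a [ha hy]]|[i0 [j hy]]]]]; subst y.
  - by rewrite yS in HS.
  - by move: (inj _ _ yS hx); rewrite /= negbK => /(_ erefl).
  - by exists a.
  - move: (inj _ _ yS hx); rewrite /= negbK.
    have oi : o0 = i by apply: val_inj.
    by rewrite oi => /(_ erefl).
have clE j x : VE j x \in S -> VW w0 \in S.
  move=> hx; case: (dom (VE j (~~ x))) => y yS.
  case/eE_inv=> [hy|[hy|[hy|[hy|[k [hk hy]]]]]]; subst y => //.
  - by rewrite yS in HS.
  - by move: (inj _ _ yS hx); rewrite /= negbK => /(_ erefl).
  - by move: (inj _ _ yS hx); rewrite /= negbK => /(_ erefl).
  - move: (inj _ _ yS hx); rewrite /= negbK => /(_ erefl) [] kj.
    by rewrite kj eqxx in hk.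
have clW (b : 'I_3) : VS (nat_of_ord b != 1) \notin S -> VW b \in S.
  move=> hb; case: (dom (VW b)) => y yS.
  case/eW_inv=> [hy|[hy|[[i [x [hi hy]]]|[b0 [j [x hy]]]]]]; subst y.
  - by rewrite yS in HS.
  - by rewrite yS in hb.
  - case: (clX _ _ yS) => a ha aS; suff -> : b = a by [].
    by apply: val_inj; rewrite /= ha hi.
  - have -> : b = w0 by apply: val_inj.
    exact: clE yS.
have exW : exists a, VW a \in S.
  case: (dom VH) => y yS; case: y yS => [|x|a|i x|i x|j x] yS //; rewrite /e //= => _.
  - by exists a.
  - by case: (clX _ _ yS) => a _; exists a.
  - by exists w0; apply: (clE j x).
have noW1 : VW w1 \notin S.
  apply/negP => h1.
  have nt : VS true \notin S.
    by apply/negP => ht; move: (inj _ _ ht h1 erefl).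
  have h0 := clW w0 nt; have h2 := clW w2 nt.
  by move: (inj _ _ h0 h2 erefl).
case: exW => a ha.
have a1 : nat_of_ord a != 1.
  by apply: contraNneq noW1 => h; suff <- : a = w1 by []; apply: val_inj.
have nf : VS false \notin S.
  apply/negP => hf; move: (inj _ _ hf ha); rewrite /= a1 => /(_ erefl).
  by [].
by have := clW w1 nf; rewrite (negbTE noW1).
Qed.
End G.

Lemma gammaT B r : gamma_t (@e B r) setT = 2 * B.+3 + 3.
Proof.
apply/eqP; rewrite eqn_leq; apply/andP; split.
  exact: leq_trans (gamma_le (@Sup_tds B r)) (@Sup_card B r).
apply: gamma_ge; last exact: (@lower B r).
rewrite card_V; nlia.
Qed.

Theorem mainTheorem8 (m D : nat) :
  odd m -> 9 <= m -> odd D -> m <= D ->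
  exists (T : finType) (e : rel T),
    [/\ simple_graph e, m_gt_critical m e, #|T| = D + m,
        max_deg e setT = D & 2 <= min_deg e setT].
Proof.
move=> om m9 oD mD.
set B := (m - 9)./2; set r := (D - m)./2.
have hB : m = 2 * B + 9.
  have := odd_double_half (m - 9); rewrite oddB // om /= -/B => h.
  by rewrite add0n in h; rewrite mul2n h subnK.
have hr : D = 2 * r + m.
  have := odd_double_half (D - m); rewrite oddB // om oD /= -/r => h.
  by rewrite add0n in h; rewrite mul2n h subnK.
exists (V B r), (@e B r); split.
- exact: simple_e.
- have gT : gamma_t (@e B r) setT = m by rewrite gammaT hB; nlia.
  split=> //; split.
    by move=> x; apply: leq_trans (@deg_ge2 B r x).
  move=> v _; rewrite gT; apply: leq_ltn_trans (@gamma_crit B r v) _; rewrite hB; nlia.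
- rewrite card_V hr hB; nlia.
- rewrite maxdeg /D0 hr hB; nlia.
- exact: mindeg.
Qed.
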